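(* Fix $n$, $\mu_n>0$ and $t\in\mathbb R$, and for $\delta\in\mathbb R$ let $\theta_n(\delta)=-(t+\delta)/n^{1/2}$. Then $$\lim_{\delta\downarrow0}\big|F_{A,n,\theta_n(-\delta)}(t)-F_{A,n,\theta_n(\delta)}(t)\big|=\Phi(t+n^{1/2}\mu_n)-\Phi(t-n^{1/2}\mu_n).$$
   Context: Gaussian location model: for each sample size $n$, $y_1,\dots,y_n$ are i.i.d. $N(\theta,1)$ with $\theta\in\mathbb R$ unknown; $\bar y$ is their mean. $P_{n,\theta}$ denotes the probability governing a sample of size $n$ when $\theta$ is the true parameter. Given a nonrandom tuning parameter $\mu_n>0$, the adaptive LASSO estimator is $\hat\theta_A=0$ if $|\bar y|\le\mu_n$ and $\hat\theta_A=\bar y-\mu_n^2/\bar y$ if $|\bar y|>\mu_n$. $F_{A,n,\theta}$ denotes the cdf of $n^{1/2}(\hat\theta_A-\theta)$ under $P_{n,\theta}$. $\Phi$ is the standard normal cdf. *)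

(* Defs.v *)
From Stdlib Require Import Reals Lra ClassicalEpsilon.
Open Scope R_scope.

Definition phi (z : R) : R := exp (- z ^ 2 / 2) / sqrt (2 * PI).

Definition improper_integral (f : R -> R) (L : R) : Prop :=
  forall eps, 0 < eps -> exists M0, forall M, M0 <= M ->
    exists pr : Riemann_integrable f (- M) M, Rabs (RiemannInt pr - L) < eps.

Definition indicator (A : R -> Prop) (z : R) : R :=
  if excluded_middle_informative (A z) then 1 else 0.

Definition std_normal_prob (A : R -> Prop) : R :=
  epsilon (inhabits 0)
    (fun L => improper_integral (fun z => phi z * indicator A z) L).

Definition Phi (x : R) : R := std_normal_prob (fun z => z <= x).

(* adaptive LASSO estimator as a function of the sample mean ybar *)
Definition alasso (mu ybar : R) : R :=
  if Rle_dec (Rabs ybar) mu then 0 else ybar - mu ^ 2 / ybar.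

(* F_{A,n,theta}(t) = P_{n,theta}( sqrt n (thetahat_A - theta) <= t ),
   using ybar = theta + Z / sqrt n with Z ~ N(0,1) under P_{n,theta}. *)
Definition F_A (n : nat) (mu theta t : R) : R :=
  std_normal_prob
    (fun z => sqrt (INR n) * (alasso mu (theta + z / sqrt (INR n)) - theta) <= t).

Definition theta_n (n : nat) (t delta : R) : R := - (t + delta) / sqrt (INR n).

(* Main.v *)
Require Import Defs.
From Stdlib Require Import Reals Lra Psatz ClassicalEpsilon Classical FunctionalExtensionality.
Open Scope R_scope.

Lemma event_pos (s mu t d z : R) : 0 < s -> 0 < mu -> 0 < d ->
  (s * (alasso mu (-(t+d)/s + z/s) - (-(t+d)/s)) <= t) <->
  z <= t + (d - sqrt (d^2 + 4*(s*mu)^2))/2.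
Proof.
  intros Hs Hmu Hd.
  set (r := sqrt (d^2 + 4*(s*mu)^2)).
  assert (Hr0 : 0 <= r) by apply sqrt_pos.
  assert (Hr2 : r * r = d^2 + 4*(s*mu)^2) by (apply sqrt_sqrt; nra).
  set (w := z - t - d).
  assert (Hy : -(t+d)/s + z/s = w / s) by (unfold w; field; lra).
  rewrite Hy.
  assert (Hm : 0 < s*mu) by nra.
  assert (Hrd : d < r) by nra.
  assert (Hrm : 2*(s*mu) < r + d) by nra.
  unfold alasso.
  destruct (Rle_dec (Rabs (w/s)) mu) as [Hle|Hgt].
  - assert (Habs : - (s*mu) <= w).
    { assert (H1 : - mu <= w/s).
      { pose proof (Rle_abs (-(w/s))) as HH. rewrite Rabs_Ropp in HH. lra. }
      apply Rmult_le_compat_l with (r:=s) in H1; [|lra].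
      replace (s * (w/s)) with w in H1 by (field; lra). lra. }
    replace (s * (0 - - (t + d) / s)) with (t + d) by (field; lra).
    unfold w in *. split; intro H; lra.
  - assert (Habs : s*mu < Rabs w).
    { apply Rnot_le_lt in Hgt.
      replace w with (s * (w/s)) by (field; lra).
      rewrite Rabs_mult, (Rabs_right s) by lra.
      apply Rmult_lt_compat_l; lra. }
    assert (Hw0 : w <> 0) by (intro E; rewrite E, Rabs_R0 in Habs; lra).
    replace (s * (w / s - mu ^ 2 / (w / s) - - (t + d) / s))
      with (w - (s*mu)^2 / w + t + d) by (field; lra).
    destruct (Rlt_le_dec w 0) as [Hneg|Hpos].
    + rewrite Rabs_left in Habs by lra.
      assert (E : w - (s*mu)^2/w = (w*w - (s*mu)^2)/w) by (field; lra).
      rewrite E. unfold w in *.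
      split; intro H.
      * assert (H2 : (z-t-d)*(z-t-d) - (s*mu)^2 >= - d * (z - t - d)).
        { apply Rmult_le_compat_l with (r := -(z-t-d)) in H; [|lra].
          replace (- (z - t - d) * (((z - t - d) * (z - t - d) - (s * mu) ^ 2) / (z - t - d) + t + d))
            with (- ((z - t - d) * (z - t - d) - (s * mu) ^ 2) - (z-t-d)*(t+d)) in H by (field; lra).
          lra. }
        nra.
      * assert (H2 : (z-t-d)*(z-t-d) - (s*mu)^2 >= - d * (z - t - d)) by nra.
        apply Rmult_le_reg_l with (r := -(z-t-d)); [lra|].
        replace (- (z - t - d) * (((z - t - d) * (z - t - d) - (s * mu) ^ 2) / (z - t - d) + t + d))
            with (- ((z - t - d) * (z - t - d) - (s * mu) ^ 2) - (z-t-d)*(t+d)) by (field; lra).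
        lra.
    + rewrite Rabs_right in Habs by lra.
      assert (E : 0 < w - (s*mu)^2/w).
      { replace (w - (s*mu)^2/w) with ((w*w - (s*mu)^2)/w) by (field; lra).
        apply Rdiv_lt_0_compat; nra. }
      unfold w in *. split; intro H; lra.
Qed.

Lemma event_neg (s mu t d z : R) : 0 < s -> 0 < mu -> d < 0 ->
  (s * (alasso mu (-(t+d)/s + z/s) - (-(t+d)/s)) <= t) <->
  z <= t + (d + sqrt (d^2 + 4*(s*mu)^2))/2.
Proof.
  intros Hs Hmu Hd.
  set (r := sqrt (d^2 + 4*(s*mu)^2)).
  assert (Hr0 : 0 <= r) by apply sqrt_pos.
  assert (Hr2 : r * r = d^2 + 4*(s*mu)^2) by (apply sqrt_sqrt; nra).
  set (w := z - t - d).
  assert (Hy : -(t+d)/s + z/s = w / s) by (unfold w; field; lra).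
  rewrite Hy.
  assert (Hm : 0 < s*mu) by nra.
  assert (Hrd : -d < r) by nra.
  assert (Hrm : 2*(s*mu) < r - d) by nra.
  unfold alasso.
  destruct (Rle_dec (Rabs (w/s)) mu) as [Hle|Hgt].
  - assert (Habs : w <= s*mu).
    { assert (H1 : w/s <= mu).
      { pose proof (Rle_abs (w/s)) as HH. lra. }
      apply Rmult_le_compat_l with (r:=s) in H1; [|lra].
      replace (s * (w/s)) with w in H1 by (field; lra). lra. }
    replace (s * (0 - - (t + d) / s)) with (t + d) by (field; lra).
    unfold w in *. split; intro H; lra.
  - assert (Habs : s*mu < Rabs w).
    { apply Rnot_le_lt in Hgt.
      replace w with (s * (w/s)) by (field; lra).
      rewrite Rabs_mult, (Rabs_right s) by lra.
      apply Rmult_lt_compat_l; lra. }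
    assert (Hw0 : w <> 0) by (intro E; rewrite E, Rabs_R0 in Habs; lra).
    replace (s * (w / s - mu ^ 2 / (w / s) - - (t + d) / s))
      with (w - (s*mu)^2 / w + t + d) by (field; lra).
    destruct (Rlt_le_dec w 0) as [Hneg|Hpos].
    + rewrite Rabs_left in Habs by lra.
      assert (E : w - (s*mu)^2/w < 0).
      { replace (w - (s*mu)^2/w) with ((w*w - (s*mu)^2)/w) by (field; lra).
        apply Ropp_lt_cancel. rewrite Ropp_0.
        replace (- ((w * w - (s * mu) ^ 2) / w)) with ((w * w - (s * mu) ^ 2) / (-w)) by (field; lra).
        apply Rdiv_lt_0_compat; nra. }
      unfold w in *. split; intro H; lra.
    + rewrite Rabs_right in Habs by lra.
      assert (E : w - (s*mu)^2/w = (w*w - (s*mu)^2)/w) by (field; lra).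
      rewrite E. unfold w in *.
      split; intro H.
      * assert (H2 : (z-t-d)*(z-t-d) - (s*mu)^2 <= - d * (z - t - d)).
        { apply Rmult_le_compat_l with (r := (z-t-d)) in H; [|lra].
          replace ((z - t - d) * (((z - t - d) * (z - t - d) - (s * mu) ^ 2) / (z - t - d) + t + d))
            with (((z - t - d) * (z - t - d) - (s * mu) ^ 2) + (z-t-d)*(t+d)) in H by (field; lra).
          nra. }
        nra.
      * assert (H2 : (z-t-d)*(z-t-d) - (s*mu)^2 <= - d * (z - t - d)) by nra.
        apply Rmult_le_reg_l with (r := (z-t-d)); [lra|].
        replace ((z - t - d) * (((z - t - d) * (z - t - d) - (s * mu) ^ 2) / (z - t - d) + t + d))
            with (((z - t - d) * (z - t - d) - (s * mu) ^ 2) + (z-t-d)*(t+d)) by (field; lra).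
        nra.
Qed.

Definition Cn := / sqrt (2 * PI).

Lemma sq2pi_pos : 0 < sqrt (2 * PI).
Proof. apply sqrt_lt_R0. pose proof PI_RGT_0; lra. Qed.

Lemma Cn_pos : 0 < Cn.
Proof. unfold Cn. apply Rinv_0_lt_compat, sq2pi_pos. Qed.

Lemma phi_eq z : phi z = Cn * exp (- z^2/2).
Proof. unfold phi, Cn, Rdiv. ring. Qed.

Lemma phi_pos z : 0 < phi z.
Proof. rewrite phi_eq. apply Rmult_lt_0_compat; [apply Cn_pos|apply exp_pos]. Qed.

Lemma exp_neg_le1 z : exp (- z^2/2) <= 1.
Proof.
  rewrite <- exp_0. assert (H : - z^2/2 <= 0) by (pose proof (pow2_ge_0 z); lra).
  destruct (Rle_lt_or_eq_dec _ _ H) as [H1|H1].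
  - left. apply exp_increasing. exact H1.
  - rewrite H1. lra.
Qed.

Lemma phi_le_C z : phi z <= Cn.
Proof.
  rewrite phi_eq. pose proof Cn_pos. pose proof (exp_neg_le1 z).
  pose proof (exp_pos (- z^2/2)). nra.
Qed.

Lemma phi_le_maj z : phi z <= (2 * Cn) * / (1 + z^2).
Proof.
  rewrite phi_eq. pose proof Cn_pos. pose proof (pow2_ge_0 z) as Hz.
  assert (H1 : exp (- z^2/2) <= 2 * / (1 + z^2)).
  { replace (- z^2/2) with (- (z^2/2)) by field. rewrite exp_Ropp.
    pose proof (exp_ineq1_le (z^2/2)).
    apply Rle_trans with (/ (1 + z^2/2)).
    - apply Rinv_le_contravar; lra.
    - replace (/ (1 + z^2/2)) with (2 * / (2 + z^2)) by (field; lra).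
      apply Rmult_le_compat_l; [lra|]. apply Rinv_le_contravar; lra. }
  nra.
Qed.

Lemma phi_cont z : continuity_pt phi z.
Proof. unfold phi. reg. Qed.

Lemma maj_cont z : continuity_pt (fun z => (2 * Cn) * / (1 + z^2)) z.
Proof. reg. pose proof (pow2_ge_0 z). lra. Qed.

Lemma ftc (f g : R -> R) a b (pr : Riemann_integrable f a b) :
  a <= b -> (forall x, a <= x <= b -> continuity_pt f x) ->
  (forall x, a <= x <= b -> derivable_pt_lim g x (f x)) ->
  RiemannInt pr = g b - g a.
Proof.
  intros Hab Hc Hd.
  rewrite (RiemannInt_P20 Hab (FTC_P1 Hab Hc) pr).
  assert (H1 := RiemannInt_P29 Hab Hc).
  assert (H2 : antiderivative f g a b).
  { split; [|exact Hab]. intros x Hx.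
    exists (exist _ (f x) (Hd x Hx)). reflexivity. }
  destruct (antiderivative_Ucte _ _ _ _ _ H1 H2) as [c Hc'].
  rewrite !Hc'; [ring | split; lra | split; lra].
Qed.

Lemma maj_int a b (pr : Riemann_integrable (fun z => (2 * Cn) * / (1 + z^2)) a b) :
  a <= b -> RiemannInt pr <= 2 * Cn * PI.
Proof.
  intros Hab.
  rewrite (ftc _ (mult_real_fct (2*Cn) atan) a b pr Hab).
  - unfold mult_real_fct. pose proof (atan_bound a). pose proof (atan_bound b).
    pose proof Cn_pos. nra.
  - intros; apply maj_cont.
  - intros x _. apply derivable_pt_lim_scal. apply derivable_pt_lim_atan.
Qed.

Lemma zero_open_int f a b : a <= b -> (forall z, a < z < b -> f z = 0) ->
  Riemann_integrable f a b.
Proof.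
  intros Hab Hz.
  assert (Hs : IsStepFun f a b).
  { exists (cons a (cons b nil)). exists (cons 0 nil). unfold adapted_couple; repeat split.
    - unfold RList.ordered_Rlist; intros i Hi; simpl in Hi; inversion Hi;
        [ simpl; assumption | match goal with H : (S i <= 0)%nat |- _ => inversion H end ].
    - simpl; unfold Rmin; destruct (Rle_dec a b); [reflexivity|contradiction].
    - simpl; unfold Rmax; destruct (Rle_dec a b); [reflexivity|contradiction].
    - unfold constant_D_eq, open_interval; intros i Hi x Hx; simpl in Hi.
      destruct i; [simpl in *; apply Hz; exact Hx| lia]. }
  intros eps. exists (mkStepFun Hs). exists (mkStepFun (StepFun_P4 a b 0)). split.
  - intros t Ht. simpl. unfold fct_cte. unfold Rminus. rewrite Rplus_opp_r, Rabs_R0. lra.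
  - rewrite StepFun_P18. rewrite Rmult_0_l, Rabs_R0. apply (cond_pos eps).
Qed.

Definition F (x : R) : R -> R := fun z => phi z * indicator (fun z => z <= x) z.

Lemma F_le x z : z <= x -> F x z = phi z.
Proof. intro H. unfold F, indicator. destruct (excluded_middle_informative (z <= x)); [ring|contradiction]. Qed.

Lemma F_gt x z : x < z -> F x z = 0.
Proof. intro H. unfold F, indicator. destruct (excluded_middle_informative (z <= x)); [lra|ring]. Qed.

Lemma F_nonneg x z : 0 <= F x z.
Proof. destruct (Rle_lt_dec z x); [rewrite F_le by lra; left; apply phi_pos | rewrite F_gt by lra; lra]. Qed.

Lemma F_le_phi x z : F x z <= phi z.
Proof. destruct (Rle_lt_dec z x); [rewrite F_le by lra; lra | rewrite F_gt by lra; left; apply phi_pos]. Qed.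

Lemma integ_le x a b : a <= b -> Riemann_integrable (F x) a b.
Proof.
  intros Hab.
  assert (Hphi : forall a b, a <= b -> b <= x -> Riemann_integrable (F x) a b).
  { intros a' b' H1 H2. apply Riemann_integrable_ext with phi.
    - intros z Hz. rewrite (Rmin_left a' b') in Hz by lra. rewrite (Rmax_right a' b') in Hz by lra. rewrite F_le by lra. reflexivity.
    - apply continuity_implies_RiemannInt; [lra|]. intros; apply phi_cont. }
  destruct (Rle_lt_dec b x) as [Hb|Hb]; [apply Hphi; lra|].
  destruct (Rle_lt_dec x a) as [Ha|Ha].
  - apply zero_open_int; [lra|]. intros z Hz. apply F_gt; lra.
  - apply RiemannInt_P24 with x.
    + apply Hphi; lra.
    + apply zero_open_int; [lra|]. intros z Hz. apply F_gt; lra.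
Qed.

Lemma integ x a b : Riemann_integrable (F x) a b.
Proof.
  destruct (Rle_lt_dec a b).
  - apply integ_le; lra.
  - apply RiemannInt_P1, integ_le; lra.
Qed.

Definition J x a b := RiemannInt (integ x a b).

Lemma J_chasles x a b c : J x a b + J x b c = J x a c.
Proof. unfold J. apply RiemannInt_P26. Qed.

Lemma J_nonneg x a b : a <= b -> 0 <= J x a b.
Proof.
  intros Hab. unfold J.
  pose proof (RiemannInt_P19 (RiemannInt_P14 a b 0) (integ x a b) Hab (fun z _ => F_nonneg x z)) as H.
  rewrite RiemannInt_P15 in H. lra.
Qed.

Definition I x M := J x (-M) M.

Lemma I_mono x M M' : 0 <= M -> M <= M' -> I x M <= I x M'.
Proof.
  intros H0 H1. unfold I.
  rewrite <- (J_chasles x (-M') (-M) M'), <- (J_chasles x (-M) M M').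
  pose proof (J_nonneg x (-M') (-M)). pose proof (J_nonneg x M M'). lra.
Qed.

Lemma I_bound x M : 0 <= M -> I x M <= 2 * Cn * PI.
Proof.
  intros H0. unfold I, J.
  assert (pr : Riemann_integrable (fun z => (2 * Cn) * / (1 + z^2)) (-M) M).
  { apply continuity_implies_RiemannInt; [lra|]. intros; apply maj_cont. }
  apply Rle_trans with (RiemannInt pr); [|apply maj_int; lra].
  apply RiemannInt_P19; [lra|]. intros z _.
  apply Rle_trans with (phi z); [apply F_le_phi|apply phi_le_maj].
Qed.

Lemma improper_exists x : exists L, improper_integral (F x) L.
Proof.
  set (E := fun r => exists M, 0 <= M /\ r = I x M).
  assert (HB : bound E).
  { exists (2 * Cn * PI). intros r [M [HM ->]]. apply I_bound; exact HM. }
  assert (HE : exists r, E r) by (exists (I x 0); exists 0; split; [lra|reflexivity]).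
  destruct (completeness E HB HE) as [L [Hub Hlub]].
  exists L. intros eps Heps.
  destruct (classic (exists M, 0 <= M /\ L - eps < I x M)) as [[M0 [HM0 HM0']]|Hn].
  - exists M0. intros M HM. exists (integ x (-M) M).
    change (RiemannInt (integ x (-M) M)) with (I x M).
    assert (I x M <= L) by (apply Hub; exists M; split; [lra|reflexivity]).
    pose proof (I_mono x M0 M HM0 HM).
    apply Rabs_def1; lra.
  - exfalso. assert (L <= L - eps); [|lra].
    apply Hlub. intros r [M [HM ->]].
    apply Rnot_lt_le. intro Hc. apply Hn. exists M. split; assumption.
Qed.

Lemma Phi_spec x : improper_integral (F x) (Phi x).
Proof.
  unfold Phi, std_normal_prob. apply epsilon_spec. apply improper_exists.
Qed.

Lemma decomp x y M : -M <= x -> x <= y -> y <= M ->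
  0 <= I y M - I x M <= Cn * (y - x).
Proof.
  intros H1 H2 H3. unfold I.
  rewrite <- (J_chasles x (-M) x M), <- (J_chasles x x y M).
  rewrite <- (J_chasles y (-M) x M), <- (J_chasles y x y M).
  assert (E1 : J x (-M) x = J y (-M) x).
  { unfold J. apply RiemannInt_P18; [lra|]. intros z Hz. rewrite !F_le by lra. reflexivity. }
  assert (E2 : J x y M = J y y M).
  { unfold J. apply RiemannInt_P18; [lra|]. intros z Hz. rewrite !F_gt by lra. reflexivity. }
  assert (E3 : J x x y = 0).
  { unfold J. pose proof (RiemannInt_const_bound (l:=0) (u:=0) (integ x x y) H2) as H.
    destruct H as [Ha Hb]; [|lra]. intros z Hz. rewrite F_gt by lra. lra. }
  assert (E4 : 0 * (y - x) <= J y x y <= Cn * (y - x)).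
  { unfold J. apply RiemannInt_const_bound; [lra|]. intros z Hz. rewrite F_le by lra.
    split; [left; apply phi_pos| apply phi_le_C]. }
  lra.
Qed.

Lemma Phi_lip x y : x <= y -> 0 <= Phi y - Phi x <= Cn * (y - x).
Proof.
  intros Hxy.
  assert (H : forall eps, 0 < eps -> - eps < Phi y - Phi x < Cn * (y - x) + eps).
  { intros eps Heps.
    destruct (Phi_spec x (eps/2)) as [Mx HMx]; [lra|].
    destruct (Phi_spec y (eps/2)) as [My HMy]; [lra|].
    set (M := Rmax (Rmax Mx My) (Rabs x + Rabs y)).
    assert (HxM : Mx <= M) by (unfold M; eapply Rle_trans; [apply Rmax_l|apply Rmax_l]).
    assert (HyM : My <= M) by (unfold M; eapply Rle_trans; [apply Rmax_r|apply Rmax_l]).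
    assert (HaM : Rabs x + Rabs y <= M) by (unfold M; apply Rmax_r).
    destruct (HMx M HxM) as [prx Hx]. destruct (HMy M HyM) as [pry Hy].
    rewrite (RiemannInt_P5 prx (integ x (-M) M)) in Hx.
    rewrite (RiemannInt_P5 pry (integ y (-M) M)) in Hy.
    change (RiemannInt (integ x (-M) M)) with (I x M) in Hx.
    change (RiemannInt (integ y (-M) M)) with (I y M) in Hy.
    pose proof (Rle_abs x). pose proof (Rle_abs y).
    pose proof (Rle_abs (-x)). pose proof (Rle_abs (-y)). rewrite Rabs_Ropp in *.
    pose proof (Rabs_pos x). pose proof (Rabs_pos y).
    pose proof (decomp x y M ltac:(lra) Hxy ltac:(lra)).
    apply Rabs_def2 in Hx. apply Rabs_def2 in Hy. lra. }
  split.
  - apply Rnot_lt_le. intro Hc. specialize (H (-(Phi y - Phi x)) ltac:(lra)). lra.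
  - apply Rnot_lt_le. intro Hc. specialize (H (Phi y - Phi x - Cn*(y-x)) ltac:(lra)). lra.
Qed.

Lemma Phi_abs x y : Rabs (Phi x - Phi y) <= Cn * Rabs (x - y).
Proof.
  pose proof Cn_pos as HC.
  destruct (Rle_lt_dec x y) as [H|H].
  - pose proof (Phi_lip x y H). rewrite Rabs_left1 by lra. rewrite Rabs_left1 by lra. lra.
  - pose proof (Phi_lip y x ltac:(lra)). rewrite Rabs_right by lra. rewrite Rabs_right by lra. lra.
Qed.

Lemma snp_ext (A B : R -> Prop) : (forall z, A z <-> B z) -> std_normal_prob A = std_normal_prob B.
Proof.
  intros H. unfold std_normal_prob.
  assert (E : indicator A = indicator B).
  { apply functional_extensionality. intro z. unfold indicator.
    destruct (excluded_middle_informative (A z)), (excluded_middle_informative (B z)); try reflexivity.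
    - exfalso; apply n; apply H; assumption.
    - exfalso; apply n; apply H; assumption. }
  rewrite E. reflexivity.
Qed.

Theorem mainTheorem10 (n : nat) (mu t : R) :
  (0 < n)%nat -> 0 < mu ->
  forall eps, 0 < eps -> exists eta, 0 < eta /\
    forall delta, 0 < delta < eta ->
      Rabs (Rabs (F_A n mu (theta_n n t (- delta)) t - F_A n mu (theta_n n t delta) t)
            - (Phi (t + sqrt (INR n) * mu) - Phi (t - sqrt (INR n) * mu))) < eps.
Proof.
  intros Hn Hmu eps Heps.
  pose proof Cn_pos as HC.
  set (s := sqrt (INR n)).
  assert (Hs : 0 < s) by (apply sqrt_lt_R0, lt_0_INR; exact Hn).
  exists (eps / (2*Cn + 1)). split; [apply Rdiv_lt_0_compat; lra|].
  intros delta [Hd Hde].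
  set (r := sqrt (delta^2 + 4*(s*mu)^2)).
  assert (Hr0 : 0 <= r) by apply sqrt_pos.
  assert (Hm : 0 < s*mu) by nra.
  assert (Hr2 : r * r = delta^2 + 4*(s*mu)^2) by (apply sqrt_sqrt; nra).
  assert (Hr3 : 2*(s*mu) <= r) by nra.
  assert (Hr4 : r <= delta + 2*(s*mu)) by nra.
  assert (Hr5 : delta <= r) by nra.
  assert (E1 : F_A n mu (theta_n n t (- delta)) t = Phi (t + (- delta + r)/2)).
  { unfold F_A, theta_n, Phi. apply snp_ext. intro z. fold s.
    unfold r. replace (delta ^ 2) with ((-delta)^2) by ring.
    apply event_neg; lra. }
  assert (E2 : F_A n mu (theta_n n t delta) t = Phi (t + (delta - r)/2)).
  { unfold F_A, theta_n, Phi. apply snp_ext. intro z. fold s.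
    apply event_pos; lra. }
  rewrite E1, E2. fold s.
  pose proof (Phi_lip (t + (delta - r)/2) (t + (- delta + r)/2) ltac:(lra)) as L1.
  pose proof (Phi_lip (t - s*mu) (t + s*mu) ltac:(lra)) as L2.
  pose proof (Phi_abs (t + (- delta + r)/2) (t + s*mu)) as A1.
  pose proof (Phi_abs (t + (delta - r)/2) (t - s*mu)) as A2.
  assert (B1 : Rabs (t + (- delta + r)/2 - (t + s*mu)) <= delta).
  { apply Rabs_le; lra. }
  assert (B2 : Rabs (t + (delta - r)/2 - (t - s*mu)) <= delta).
  { apply Rabs_le; lra. }
  rewrite (Rabs_right (Phi (t + (- delta + r) / 2) - Phi (t + (delta - r) / 2))) by lra.
  assert (Hd2 : 2 * Cn * delta < eps).
  { apply Rlt_le_trans with (2 * Cn * (eps / (2*Cn+1))).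
    - apply Rmult_lt_compat_l; lra.
    - unfold Rdiv. rewrite <- Rmult_assoc. apply Rle_trans with ((2*Cn+1) * eps * / (2*Cn+1)).
      + apply Rmult_le_compat_r; [left; apply Rinv_0_lt_compat; lra | nra].
      + right. field. lra. }
  assert (A1' : Rabs (Phi (t + (- delta + r) / 2) - Phi (t + s * mu)) <= Cn * delta)
    by (eapply Rle_trans; [exact A1| apply Rmult_le_compat_l; lra]).
  assert (A2' : Rabs (Phi (t + (delta - r) / 2) - Phi (t - s * mu)) <= Cn * delta)
    by (eapply Rle_trans; [exact A2| apply Rmult_le_compat_l; lra]).
  apply Rle_lt_trans with (2 * Cn * delta); [|exact Hd2].
  clear -A1' A2'.
  unfold Rabs in *. repeat destruct Rcase_abs; lra.
Qed.
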